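(* Let $I$ be a finite set of positive integers and $m=\max(I\cup\{0\})$. If $z_0$ is a real root of $d(I;z)$, then $z_0\le 2m-1$.
   Context: $d(I;z)$ is the descent polynomial: the unique polynomial whose value at each integer $n>m$ is the number of permutations $\pi\in\mathfrak S_n$ with $\{j\mid\pi_j>\pi_{j+1}\}=I$, evaluated at $z$. *)

(* Defs.v *)
From HB Require Import structures.
From mathcomp Require Import all_boot all_order all_algebra all_fingroup.
Set Implicit Arguments. Unset Strict Implicit. Unset Printing Implicit Defensive.
Import Order.TTheory GRing.Theory Num.Theory.
Local Open Scope ring_scope.
Local Open Scope nat_scope.

(* One-line notation of s : 'S_n, with values 0..n-1 (order-isomorphic to 1..n). *)
Definition oneline (n : nat) (s : 'S_n) : seq nat := [seq val (s i) | i <- enum 'I_n].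

(* Descent set of s, with positions 1-indexed: j in {1..n-1} with pi_j > pi_{j+1}. *)
Definition descset (n : nat) (s : 'S_n) : seq nat :=
  [seq j <- iota 1 n.-1 | nth 0 (oneline s) j < nth 0 (oneline s) j.-1].

Definition desc_count (I : seq nat) (n : nat) : nat :=
  #|[set s : 'S_n | all (fun j => j \in I) (descset s) && all (fun j => j \in descset s) I]|.

Definition maxI (I : seq nat) : nat := \max_(i <- I) i.

Definition is_descent_poly (R : nzRingType) (I : seq nat) (p : {poly R}) : Prop :=
  forall n : nat, (maxI I < n)%N -> (p.[n%:R] = (desc_count I n)%:R)%R.

(* Main.v *)
Require Import Defs.
From HB Require Import structures.
From mathcomp Require Import all_boot all_order all_algebra all_fingroup.
From mathcomp Require Import zify ring.
Import Order.TTheory GRing.Theory Num.Theory.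

Module NatPart.
Set Implicit Arguments. Unset Strict Implicit. Unset Printing Implicit Defensive.
Local Open Scope nat_scope.


Definition fv (k : nat) (g : 'I_k -> 'I_k) (a : nat) : nat :=
  nth 0 [seq val (g i) | i <- enum 'I_k] a.

Lemma fvE k (g : 'I_k -> 'I_k) (i : 'I_k) : fv g i = g i.
Proof. by rewrite /fv (nth_map i) ?size_enum_ord ?ltn_ord // nth_ord_enum. Qed.

Lemma fvO k (g : 'I_k -> 'I_k) a (ha : a < k) : fv g a = g (Ordinal ha).
Proof. by rewrite -fvE. Qed.

Lemma onelineE n (s : 'S_n) a : nth 0 (oneline s) a = fv s a.
Proof. by []. Qed.

Lemma asc_id k (g : 'I_k -> 'I_k) : injective g ->
  (forall a, 0 < a < k -> fv g a.-1 <= fv g a) -> forall i, g i = i.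
Proof.
move=> ginj hasc.
have strict : forall a, 0 < a < k -> fv g a.-1 < fv g a.
  move=> a /andP[a0 ak]; rewrite ltn_neqAle hasc ?a0 ?ak // andbT.
  have ha1 : a.-1 < k by lia.
  rewrite (fvO g ha1) (fvO g ak); apply/negP => /eqP/val_inj/ginj/(congr1 val) /=.
  lia.
have up : forall a, a < k -> a <= fv g a.
  elim=> [|a IH] ak //; have := strict a.+1; rewrite /= ak => /(_ isT).
  have := IH (ltnW ak); lia.
have down : forall d a, a < k -> d = k.-1 - a -> fv g a + d <= k.-1.
  elim=> [|d IH] a ak hd.
    rewrite addn0 (fvO g ak); have := ltn_ord (g (Ordinal ak)); lia.
  have ha : a.+1 < k by lia.
  have := IH a.+1 ha ltac:(lia); have := strict a.+1; rewrite /= ha => /(_ isT).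
  lia.
move=> i; apply/val_inj => /=.
have := up i (ltn_ord i); have := down _ i (ltn_ord i) erefl; rewrite fvE; lia.
Qed.


Definition Dall (I : seq nat) n (s : 'S_n) :=
  all (fun j => (fv s j < fv s j.-1) == (j \in I)) (iota 1 n.-1).

Lemma desc_countE (I : seq nat) n : (forall i, i \in I -> 0 < i < n) ->
  desc_count I n = #|[set s : 'S_n | Dall I s]|.
Proof.
move=> hI; rewrite /desc_count; apply: eq_card => s; rewrite !inE.
rewrite /descset /Dall.
apply/andP/allP.
  move=> [/allP h1 /allP h2] j hj.
  case hd: (fv s j < fv s j.-1).
    by rewrite eq_sym; apply/eqP/h1; rewrite mem_filter hj onelineE hd.
  apply/eqP; apply/esym/negbTE/negP => jI.
  by have := h2 j jI; rewrite mem_filter ?onelineE hd.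
move=> h; split; apply/allP => j.
  rewrite mem_filter => /andP[hd hj]; have := h j hj.
  by rewrite ?onelineE hd eq_sym => /eqP.
move=> jI; have hj : j \in iota 1 n.-1 by rewrite mem_iota; have := hI j jI; lia.
by have := h j hj; rewrite jI mem_filter hj andbT ?onelineE => /eqP->.
Qed.

Lemma maxI_ge I i : i \in I -> i <= maxI I.
Proof. by move=> hi; rewrite /maxI (leq_bigmax_seq _ hi). Qed.

Lemma maxI_in I : I != [::] -> maxI I \in I.
Proof.
rewrite /maxI; elim: I => [|a I IH] // _; rewrite big_cons inE.
case: I IH => [|b I] IH; first by rewrite big_nil maxn0 eqxx.
have := IH isT; set M := \max_(j <- b :: I) j => hin.
case: (leqP a M) => h.
  by rewrite hin orbT.
by rewrite eqxx.
Qed.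


Definition rk k (A : {set 'I_k}) (x : 'I_k) := #|[set y in A | y < x]|.

Lemma rk_lt k (A : {set 'I_k}) x y : x \in A -> y \in A -> x < y -> rk A x < rk A y.
Proof.
move=> xA yA xy; apply: proper_card; apply/properP; split.
  apply/subsetP => z; rewrite !inE => /andP[-> zx] /=; exact: ltn_trans zx xy.
by exists x; rewrite !inE ?xA ?xy // ltnn andbF.
Qed.

Lemma rk_ltE k (A : {set 'I_k}) x y : x \in A -> y \in A -> (rk A x < rk A y) = (x < y).
Proof.
move=> xA yA; apply/idP/idP; last exact: rk_lt.
case: (ltngtP x y) => // [h|/val_inj ->]; last by rewrite ltnn.
by move=> h2; have := rk_lt yA xA h; lia.
Qed.

Lemma rk_inj k (A : {set 'I_k}) x y : x \in A -> y \in A -> rk A x = rk A y -> x = y.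
Proof.
move=> xA yA h; apply/val_inj; case: (ltngtP x y) => // hh.
  by have := rk_lt xA yA hh; rewrite h ltnn.
by have := rk_lt yA xA hh; rewrite h ltnn.
Qed.

Lemma rk_bound k (A : {set 'I_k}) x : x \in A -> rk A x < #|A|.
Proof.
move=> xA; apply: proper_card; apply/properP; split.
  by apply/subsetP => z; rewrite !inE => /andP[].
by exists x; rewrite // !inE ltnn andbF.
Qed.

Lemma card_below k c : c <= k -> #|[set y : 'I_k | y < c]| = c.
Proof.
move=> ck.
have -> : [set y : 'I_k | y < c] = (widen_ord ck) @: [set: 'I_c].
  apply/setP => y; rewrite !inE; apply/idP/imsetP.
    by move=> yc; exists (Ordinal yc); rewrite ?inE //; apply/val_inj.
  by move=> [z _ ->] /=.
by rewrite card_imset ?cardsT ?card_ord //; by move=> a b /(congr1 val) /= h; apply/val_inj.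
Qed.

Section Core.
Variables (n m : nat).
Hypothesis hmn : m < n.

Definition pre (i : 'I_m) : 'I_n := widen_ord (ltnW hmn) i.
Lemma postP (j : 'I_(n - m)) : m + j < n.
Proof. by rewrite -ltn_subRL. Qed.
Definition post (j : 'I_(n - m)) : 'I_n := Ordinal (postP j).

Lemma pre_inj : injective pre.
Proof. by move=> a b /(congr1 val) /= h; apply/val_inj. Qed.
Lemma post_inj : injective post.
Proof. by move=> a b /(congr1 val) /= /addnI h; apply/val_inj. Qed.
Lemma pre_post i j : pre i != post j.
Proof. by apply/negP => /eqP/(congr1 val) /=; have := ltn_ord i; lia. Qed.

Definition Sset (s : 'S_n) := [set s (pre i) | i : 'I_m].

Lemma card_S (s : 'S_n) : #|Sset s| = m.
Proof.
by rewrite card_imset ?cardsT ?card_ord // => a b /perm_inj /pre_inj.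
Qed.
Lemma card_CS (s : 'S_n) : #|~: Sset s| = n - m.
Proof. by have := cardsC (Sset s); rewrite card_S card_ord; lia. Qed.

Lemma mem_pre (s : 'S_n) i : s (pre i) \in Sset s.
Proof. exact: imset_f. Qed.
Lemma mem_post (s : 'S_n) j : s (post j) \notin Sset s.
Proof.
apply/imsetP => [[i _ /perm_inj h]]; have := pre_post i j; by rewrite h eqxx.
Qed.

Definition uf (s : 'S_n) : {ffun 'I_m -> 'I_m} :=
  [ffun i => insubd i (rk (Sset s) (s (pre i)))].
Definition vf (s : 'S_n) : {ffun 'I_(n - m) -> 'I_(n - m)} :=
  [ffun j => insubd j (rk (~: Sset s) (s (post j)))].

Lemma ufE (s : 'S_n) i : val (uf s i) = rk (Sset s) (s (pre i)).
Proof. by rewrite ffunE val_insubd; have := rk_bound (mem_pre s i); rewrite card_S => ->. Qed.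
Lemma vfE (s : 'S_n) j : val (vf s j) = rk (~: Sset s) (s (post j)).
Proof.
rewrite ffunE val_insubd.
have h : s (post j) \in ~: Sset s by rewrite inE mem_post.
by have := rk_bound h; rewrite card_CS => ->.
Qed.

Definition Theta (s : 'S_n) := (Sset s, uf s, vf s).

Lemma pre_or_post (x : 'I_n) : (exists i, x = pre i) \/ (exists j, x = post j).
Proof.
case: (ltnP x m) => h; first by left; exists (Ordinal h); apply/val_inj.
have h2 : x - m < n - m by have := ltn_ord x; lia.
by right; exists (Ordinal h2); apply/val_inj => /=; lia.
Qed.

Lemma Theta_inj : injective Theta.
Proof.
move=> s t [eS eu ev]; apply/permP => x.
case: (pre_or_post x) => [[i ->]|[j ->]].
  apply: (@rk_inj _ (Sset s)); rewrite ?mem_pre ?eS ?mem_pre //.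
  by have := congr1 (fun f : {ffun _ -> _} => val (f i)) eu; rewrite /= !ufE -eS.
apply: (@rk_inj _ (~: Sset s)); rewrite ?inE ?mem_post ?eS ?mem_post //.
by have := congr1 (fun f : {ffun _ -> _} => val (f j)) ev; rewrite /= !vfE -eS.
Qed.


Definition Tset : {set ({set 'I_n} * {ffun 'I_m -> 'I_m}) * {ffun 'I_(n - m) -> 'I_(n - m)}} :=
  setX (setX [set A : {set 'I_n} | #|A| == m] [set f : {ffun 'I_m -> 'I_m} | injectiveb f]) [set f : {ffun 'I_(n - m) -> 'I_(n - m)} | injectiveb f].

Lemma card_T : #|Tset| = n`!.
Proof.
rewrite !cardsX card_draws !card_inj_ffuns !card_ord !ffactnn -mulnA.
exact: bin_fact (ltnW hmn).
Qed.

Lemma Theta_T (s : 'S_n) : Theta s \in Tset.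
Proof.
rewrite !inE /= card_S eqxx /=; apply/andP; split; apply/injectiveP.
  move=> i j h; have := congr1 val h; rewrite !ufE => /rk_inj.
  by move=> /(_ (mem_pre s i) (mem_pre s j)) /perm_inj /pre_inj.
move=> i j h; have := congr1 val h; rewrite !vfE => /rk_inj.
by rewrite !inE !mem_post => /(_ isT isT) /perm_inj /post_inj.
Qed.

Lemma Theta_img : Theta @: setT = Tset.
Proof.
apply/eqP; rewrite eqEcard; apply/andP; split.
  by apply/subsetP => t /imsetP [s _ ->]; exact: Theta_T.
by rewrite card_T card_imset ?cardsT ?card_Sn //; exact: Theta_inj.
Qed.

Lemma Theta_count (P : pred ({set 'I_n} * {ffun 'I_m -> 'I_m} * {ffun 'I_(n - m) -> 'I_(n - m)})) :
  #|[set s : 'S_n | P (Theta s)]| = #|[set t in Tset | P t]|.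
Proof.
rewrite -(card_imset _ Theta_inj); apply: eq_card => t.
rewrite [in RHS]inE; apply/imsetP/andP.
  by move=> [s]; rewrite inE => hs ->; rewrite Theta_T.
move=> [tT Pt]; rewrite -Theta_img in tT; case/imsetP: tT => s _ ets.
by exists s; rewrite // inE -ets.
Qed.

Lemma E1 (s : 'S_n) (i j : 'I_m) : (s (pre i) < s (pre j)) = (uf s i < uf s j).
Proof. by rewrite !ufE rk_ltE ?mem_pre. Qed.

Lemma E2 (s : 'S_n) (i j : 'I_(n - m)) : (s (post i) < s (post j)) = (vf s i < vf s j).
Proof. by rewrite !vfE rk_ltE // inE mem_post. Qed.

Lemma E3 (s : 'S_n) (i0 : 'I_m) (j0 : 'I_(n - m)) : val (vf s j0) = 0 ->
  (s (post j0) < s (pre i0)) = ~~ [forall y : 'I_n, (y <= uf s i0) ==> (y \in Sset s)].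
Proof.
rewrite vfE => hw.
set S := Sset s; set x := s (pre i0); set w := s (post j0).
have below : forall y : 'I_n, y < w -> y \in S.
  move=> y yw; apply/negPn/negP => yS.
  have : y \in [set z in ~: S | z < w] by rewrite !inE yS yw.
  by move/cards0_eq: hw => ->; rewrite inE.
have xS : x \in S by exact: mem_pre.
have wS : w \notin S by exact: mem_post.
have ku : val (uf s i0) = rk S x by rewrite ufE.
apply/idP/idP.
  move=> wx; apply/negP => /forallP /(_ w); rewrite (negbTE wS) implybF -ltnNge => kw.
  have : #|[set y : 'I_n | y < w]| <= rk S x.
    apply: subset_leq_card; apply/subsetP => y; rewrite !inE => yw.
    by rewrite below // (ltn_trans yw wx).
  by rewrite card_below ?(ltnW (ltn_ord _)) // -ku => h; have := leq_ltn_trans h kw; rewrite ltnn.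
move=> /negP hn; case: (ltngtP w x) => // [xw|/val_inj ewx]; last first.
  by move: wS; rewrite ewx xS.
exfalso; apply: hn; apply/forallP => y; apply/implyP => yk.
have kx : rk S x = x.
  rewrite -[RHS](@card_below n x (ltnW (ltn_ord x))); apply: eq_card => z.
  rewrite !inE; case zx: (z < x); rewrite ?andbF ?andbT //.
  by apply: below; exact: ltn_trans zx xw.
by apply: below; rewrite ku kx in yk; exact: leq_ltn_trans yk xw.
Qed.

Definition Du (I : seq nat) (u : {ffun 'I_m -> 'I_m}) :=
  all (fun j => (fv u j < fv u j.-1) == (j \in I)) (iota 1 m.-1).
Definition Av (v : {ffun 'I_(n - m) -> 'I_(n - m)}) :=
  all (fun a => fv v a.-1 <= fv v a) (iota 1 (n - m).-1).
Definition Kc (A : {set 'I_n}) (u : {ffun 'I_m -> 'I_m}) :=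
  [forall y : 'I_n, (y <= fv u m.-1) ==> (y \in A)].
Definition Pt (I : seq nat) (t : {set 'I_n} * {ffun 'I_m -> 'I_m} * {ffun 'I_(n - m) -> 'I_(n - m)}) :=
  [&& Du I t.1.2, Av t.2 & ~~ Kc t.1.1 t.1.2].

Lemma fv_pre_nat (s : 'S_n) a (ha : a < m) : fv s a = s (pre (Ordinal ha)).
Proof. by rewrite (fvO s (ltn_trans ha hmn)); congr (val (s _)); apply/val_inj. Qed.

Lemma fv_post_nat (s : 'S_n) a (ha : a < n - m) : fv s (m + a) = s (post (Ordinal ha)).
Proof. by rewrite (fvO s (postP (Ordinal ha))). Qed.

Lemma vf_inj (s : 'S_n) : injective (vf s).
Proof. by have := Theta_T s; rewrite !inE => /andP[_ /injectiveP]. Qed.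

Lemma Dall_Pt (I : seq nat) (s : 'S_n) : 0 < m -> m \in I ->
  (forall i, i \in I -> 0 < i <= m) -> Dall I s = Pt I (Theta s).
Proof.
move=> hm0 mI hI.
have hnm : 0 < n - m by rewrite subn_gt0.
have hm1 : m.-1 < m by rewrite prednK.
rewrite /Dall /Pt /=.
have -> : iota 1 n.-1 = iota 1 m.-1 ++ m :: iota m.+1 (n - m).-1.
  have -> : n.-1 = m.-1 + (n - m).-1.+1 by lia.
  by rewrite iotaD; congr (_ ++ _); rewrite add1n prednK.
rewrite all_cat /= mI.
have -> : all (fun j => (fv s j < fv s j.-1) == (j \in I)) (iota 1 m.-1) = Du I (uf s).
  apply: eq_in_all => j; rewrite mem_iota => hj.
  have ja : j < m by lia.
  have jb : j.-1 < m by lia.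
  by rewrite (fv_pre_nat s ja) (fv_pre_nat s jb) E1 (fvO (uf s) ja) (fvO (uf s) jb).
have -> : all (fun j => (fv s j < fv s j.-1) == (j \in I)) (iota m.+1 (n - m).-1) = Av (vf s).
  rewrite -addn1 iotaDl all_map; apply: eq_in_all => a; rewrite mem_iota => ha /=.
  have jI : (m + a \in I) = false.
    by apply/negP => /hI; lia.
  have aa : a < n - m by lia.
  have ab : a.-1 < n - m by lia.
  have -> : (m + a).-1 = m + a.-1 by lia.
  rewrite jI eqbF_neg (fv_post_nat s aa) (fv_post_nat s ab) E2 -leqNgt.
  by rewrite (fvO (vf s) aa) (fvO (vf s) ab).
case hA: (Av (vf s)); last by rewrite !andbF.
rewrite andbT; congr (_ && _).
have v0 : val (vf s (Ordinal hnm)) = 0.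
  rewrite (asc_id (@vf_inj s)) //.
  by move=> a ha; move/allP: hA; apply; rewrite mem_iota; lia.
rewrite eqb_id /=.
have -> : fv s m = s (post (Ordinal hnm)) by rewrite -(fv_post_nat s hnm) addn0.
rewrite (fv_pre_nat s hm1) E3 // /Kc (fvO (uf s) hm1).
by congr (~~ _); apply: eq_forallb => y; congr ((_ <= val (uf s _)) ==> _); apply/val_inj.
Qed.

End Core.


Lemma card_pairs (T1 T2 : finType) (A : pred (T1 * T2)) :
  #|[set p | A p]| = \sum_(y : T2) #|[set x | A (x, y)]|.
Proof.
rewrite -sum1_card (eq_bigl (fun p => A p)); last by move=> p; rewrite inE.
rewrite big_mkcond /= (eq_bigr (fun p => if A (p.1, p.2) then 1 else 0)); last by case.
rewrite -(pair_bigA _ (fun x y => if A (x, y) then 1 else 0)) /=.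
rewrite exchange_big; apply: eq_bigr => y _.
by rewrite -sum1_card [RHS]big_mkcond; apply: eq_bigr => x _; rewrite inE.
Qed.

Lemma card_sup (T : finType) (K : {set T}) (k : nat) : #|K| <= k ->
  #|[set A : {set T} | (K \subset A) && (#|A| == k)]| = 'C(#|T| - #|K|, k - #|K|).
Proof.
move=> hK.
pose D := [set A : {set T} | (K \subset A) && (#|A| == k)].
have inj : {in D &, injective (fun A => A :\: K)}.
  move=> A B; rewrite !inE => /andP[KA _] /andP[KB _] h.
  have eA : A = K :|: (A :\: K) by rewrite -{1}(setID A K) (setIidPr KA).
  have eB : B = K :|: (B :\: K) by rewrite -{1}(setID B K) (setIidPr KB).
  by rewrite eA eB h.
rewrite -(card_in_imset inj).
have -> : [set A :\: K | A in D] = [set B : {set T} | B \subset ~: K & #|B| == k - #|K|].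
  apply/setP => B; rewrite inE; apply/imsetP/andP.
    move=> [A]; rewrite inE => /andP[KA /eqP cA] ->; split.
      by rewrite setDE subsetIr.
    by rewrite cardsDS // cA.
  move=> [BK /eqP cB]; exists (B :|: K).
    rewrite inE subsetUr /= cardsU.
    have -> : B :&: K = set0.
      apply/setP => x; rewrite !inE; apply/negP => /andP[xB xK].
      by have := subsetP BK x xB; rewrite inE xK.
    by rewrite cards0 subn0 cB subnK.
  rewrite setDUl setDv setU0; apply/setP => x; rewrite !inE.
  case xB: (x \in B); case xK: (x \in K) => //=.
  by have := subsetP BK x xB; rewrite inE xK.
by rewrite cards_draws cardsCs setCK.
Qed.

Lemma card_Av n m : #|[set v : {ffun 'I_(n - m) -> 'I_(n - m)} | injectiveb v && Av v]| = 1.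
Proof.
have -> : [set v : {ffun 'I_(n - m) -> 'I_(n - m)} | injectiveb v && Av v] = [set [ffun j => j]].
  apply/setP => v; rewrite !inE; apply/andP/eqP.
    move=> [/injectiveP vi hA]; apply/ffunP => j; rewrite ffunE.
    apply: (asc_id vi) => a ha; move/allP: hA; apply; rewrite mem_iota; lia.
  move=> ->; split.
    by apply/injectiveP => a b; rewrite !ffunE.
  apply/allP => a; rewrite mem_iota => ha.
  have h1 : a < n - m by lia.
  have h2 : a.-1 < n - m by lia.
  by rewrite (fvO _ h1) (fvO _ h2) !ffunE /=; lia.
exact: cards1.
Qed.

Lemma card_notK n m (u : {ffun 'I_m -> 'I_m}) : 0 < m -> m < n ->
  #|[set A : {set 'I_n} | (#|A| == m) && ~~ Kc A u]| + 
  'C(n - (fv u m.-1).+1, m - (fv u m.-1).+1) = 'C(n, m).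
Proof.
move=> hm0 hmn.
set k := fv u m.-1.
have hk : k < m.
  have hm1 : m.-1 < m by lia.
  by rewrite /k (fvO u hm1) ltn_ord.
pose K := [set y : 'I_n | y < k.+1].
have cK : #|K| = k.+1 by rewrite card_below //; lia.
have -> : 'C(n - k.+1, m - k.+1) = #|[set A : {set 'I_n} | (#|A| == m) && Kc A u]|.
  have hKm : #|K| <= m by rewrite cK.
  have hs := @card_sup _ K m hKm; rewrite card_ord cK in hs; rewrite -hs.
  apply: eq_card => A; rewrite !inE andbC; congr (_ && _).
  apply/subsetP/forallP => h y.
    by apply/implyP => yk; apply: h; rewrite inE ltnS.
  by rewrite inE ltnS => yk; move/implyP: (h y); apply.
have := card_draws 'I_n m; rewrite card_ord => <-.
rewrite -(cardsID [set A : {set 'I_n} | Kc A u] [set A : {set 'I_n} | #|A| == m]) addnC.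
by congr (_ + _); apply: eq_card => A; rewrite !inE // andbC.
Qed.


Lemma maxI_pos I : I != [::] -> all (fun i => 0 < i) I -> 0 < maxI I.
Proof. by move=> hne /allP; apply; exact: maxI_in. Qed.

Lemma count_formula I n : I != [::] -> all (fun i => 0 < i) I -> maxI I < n ->
  desc_count I n = \sum_(u : {ffun 'I_(maxI I) -> 'I_(maxI I)} | injectiveb u && Du I u)
     #|[set A : {set 'I_n} | (#|A| == maxI I) && ~~ Kc A u]|.
Proof.
move=> hne hpos hmn.
have hm0 := maxI_pos hne hpos.
move: (maxI_in hne) (@maxI_ge I) hmn hm0.
set m := maxI I => mI hle hmn hm0.
have hI : forall i, i \in I -> 0 < i <= m.
  by move=> i iI; rewrite hle // andbT; move/allP: hpos; apply.
rewrite desc_countE; last by move=> i /hI; lia.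
rewrite (eq_card (B := [set s : 'S_n | Pt I (Theta hmn s)])); last first.
  by move=> s; rewrite !inE (Dall_Pt hmn).
rewrite Theta_count.
rewrite card_pairs.
pose N := #|[set p : {set 'I_n} * {ffun 'I_m -> 'I_m} |
              [&& #|p.1| == m, injectiveb p.2, Du I p.2 & ~~ Kc p.1 p.2]]|.
rewrite (eq_bigr (fun v : {ffun 'I_(n - m) -> 'I_(n - m)} => if injectiveb v && Av v then N else 0)); last first.
  move=> v _; case hv: (injectiveb v && Av v).
    apply: eq_card => p; rewrite !inE /Pt /=.
    by move: hv => /andP[-> ->]; rewrite !andbT; case: (#|p.1| == m); case: (injectiveb p.2).
  apply: eq_card0 => p; rewrite !inE /Pt /=.
  by move: hv; case: (injectiveb v); case: (Av v); rewrite ?andbF.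
rewrite -big_mkcond sum_nat_const.
have -> : #|[pred v : {ffun 'I_(n - m) -> 'I_(n - m)} | injectiveb v && Av v]| = 1.
  by rewrite -(card_Av n m); apply: eq_card => v; rewrite !inE.
rewrite mul1n /N card_pairs [RHS]big_mkcond /=; apply: eq_bigr => u _.
case hu: (injectiveb u && Du I u).
  by apply: eq_card => A; rewrite !inE /=; move: hu => /andP[-> ->].
apply: eq_card0 => A; rewrite !inE /=.
by move: hu; case: (injectiveb u); case: (Du I u); rewrite ?andbF.
Qed.


Section Exist.
Variables (I : seq nat) (m : nat).

Definition cnt a := count (fun j => j \notin I) (iota 1 a).
Definition key (i : 'I_m) := cnt i * m.+1 + (m - i).
Definition rkk (i : 'I_m) := #|[set i' : 'I_m | key i' < key i]|.
Definition u0 : {ffun 'I_m -> 'I_m} := [ffun i => insubd i (rkk i)].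

Lemma rkk_bound i : rkk i < m.
Proof.
rewrite [X in _ < X](_ : _ = #|[set: 'I_m]|); last by rewrite cardsT card_ord.
apply: proper_card; apply/properP; split.
  exact: subsetT.
by exists i; rewrite ?inE // ltnn.
Qed.

Lemma u0E i : val (u0 i) = rkk i.
Proof. by rewrite ffunE val_insubd rkk_bound. Qed.

Lemma key_inj : injective key.
Proof.
move=> i j h; have := congr1 (fun x => x %% m.+1) h; rewrite /key !modnMDl.
rewrite !modn_small; try lia.
move=> e; apply/val_inj => /=; move: e (ltn_ord i) (ltn_ord j); clear h; case: i j => [i hi] [j hj] /=; lia.
Qed.

Lemma rkk_lt i j : key i < key j -> rkk i < rkk j.
Proof.
move=> h; apply: proper_card; apply/properP; split.
  by apply/subsetP => x; rewrite !inE => hx; exact: ltn_trans hx h.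
by exists i; rewrite !inE ?h // ltnn.
Qed.

Lemma rkk_ltE i j : (rkk i < rkk j) = (key i < key j).
Proof.
apply/idP/idP; last exact: rkk_lt.
case: (ltngtP (key i) (key j)) => // [h|/key_inj ->]; last by rewrite ltnn.
by move=> h2; have := rkk_lt h; lia.
Qed.

Lemma u0_inj : injective u0.
Proof.
move=> i j /(congr1 val); rewrite !u0E => h.
case: (ltngtP (key i) (key j)) => [/rkk_lt|/rkk_lt|/key_inj //]; lia.
Qed.

Lemma cntS a : cnt a.+1 = cnt a + (a.+1 \notin I).
Proof. by rewrite /cnt -[a.+1]addn1 iotaD count_cat /= addn0 add1n addn1. Qed.

Lemma u0_Du : Du I u0.
Proof.
apply/allP => j; rewrite mem_iota => hj.
have ja : j < m by lia.
have jb : j.-1 < m by lia.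
rewrite (fvO _ ja) (fvO _ jb) !u0E rkk_ltE /key /=.
have -> : j = (j.-1).+1 by lia.
rewrite cntS /=.
case: (j.-1.+1 \in I) => /=; rewrite ?addn0 ?addn1 ?mulSn; set X := cnt _ * m.+1; apply/eqP; lia.
Qed.

End Exist.

Lemma exists_u I m : exists u : {ffun 'I_m -> 'I_m}, injectiveb u && Du I u.
Proof. by exists (u0 I m); rewrite u0_Du andbT; apply/injectiveP; exact: u0_inj. Qed.

End NatPart.
Import NatPart.

Module RingPart.
Set Implicit Arguments. Unset Strict Implicit. Unset Printing Implicit Defensive.
Local Open Scope ring_scope.

Definition Qp (R : fieldType) (a k : nat) : {poly R} :=
  (k`!%:R)^-1 *: \prod_(i < k) ('X - ((a + i)%:R)%:P).

Lemma QpE (R : fieldType) a k (x : R) :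
  (Qp R a k).[x] = (k`!%:R)^-1 * \prod_(i < k) (x - (a + i)%:R).
Proof. by rewrite /Qp hornerZ horner_prod; congr (_ * _); apply: eq_bigr => i _; rewrite hornerXsubC. Qed.

Lemma prod_ffact (M k : nat) : (\prod_(i < k) (M - i))%N = M ^_ k.
Proof. by elim: k => [|k IH]; rewrite ?big_ord0 ?ffactn0 // big_ord_recr /= IH ffactnSr. Qed.

Lemma Qp_nat (R : numFieldType) a k (N : nat) : (a + k <= N)%N -> (Qp R a k).[N%:R] = ('C(N - a, k))%:R.
Proof.
move=> h; rewrite QpE.
have -> : \prod_(i < k) (N%:R - (a + i)%:R) = (\prod_(i < k) (N - a - i))%N%:R :> R.
  rewrite natr_prod; apply: eq_bigr => i _; rewrite natrB; last by have := ltn_ord i; lia.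
  by rewrite natrB; [rewrite natrD opprD addrA | lia].
rewrite prod_ffact -bin_ffact natrM mulrC mulfK //.
by rewrite pnatr_eq0 -lt0n fact_gt0.
Qed.

Lemma Qp_rec (R : fieldType) a k (z : R) :
  (Qp R a k.+1).[z] = (Qp R a.+1 k).[z] * ((z - a%:R) / (k.+1)%:R).
Proof.
rewrite !QpE big_ord_recl /= addn0 factS natrM invfM.
have -> : \prod_(i < k) (z - (a + bump 0 i)%:R) = \prod_(i < k) (z - (a.+1 + i)%:R).
  by apply: eq_bigr => i _; rewrite /bump /= add1n addnS addSn.
by ring.
Qed.

Section Pos.
Variables (R : realFieldType) (m : nat) (z : R).
Hypothesis hz : m%:R < z.

Definition G t := (Qp R (m - t) t).[z].

Lemma G_step t : (t < m)%N -> G t.+1 = G t * ((z - (m - t.+1)%:R) / (t.+1)%:R).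
Proof.
move=> ht; rewrite /G Qp_rec; congr ((Qp R _ t).[z] * _); lia.
Qed.

Lemma G_pos t : (t <= m)%N -> 0 < G t.
Proof.
elim: t => [|t IH] ht.
  by rewrite /G QpE big_ord0 mulr1 fact0 invr1 ltr01.
rewrite G_step //; apply: mulr_gt0; first by apply: IH; lia.
apply: divr_gt0; last by rewrite ltr0n.
rewrite subr_gt0; apply: le_lt_trans hz; rewrite ler_nat; lia.
Qed.

Lemma G_incr t : (t < m)%N -> G t < G t.+1.
Proof.
move=> ht; rewrite G_step // -{1}(mulr1 (G t)) ltr_pM2l ?G_pos //; last lia.
rewrite ltr_pdivlMr ?ltr0n // mul1r ltrBrDr -natrD.
by apply: le_lt_trans hz; rewrite ler_nat; lia.
Qed.

Lemma G_lt_aux t d : (t + d.+1 <= m)%N -> G t < G (t + d.+1).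
Proof.
elim: d => [|d IH] h; first by rewrite addn1 G_incr //; lia.
apply: (lt_trans (IH ltac:(lia))); rewrite [(t + d.+2)%N]addnS; apply: G_incr; lia.
Qed.

Lemma G_lt t : (t < m)%N -> G t < G m.
Proof.
move=> ht; have := @G_lt_aux t (m - t.+1)%N ltac:(lia).
by have -> : (t + (m - t.+1).+1)%N = m by lia.
Qed.

End Pos.


Lemma poly_eq_nat (R : numDomainType) (p q : {poly R}) (M : nat) :
  (forall n : nat, (M < n)%N -> p.[n%:R] = q.[n%:R]) -> p = q.
Proof.
move=> h; apply/eqP; rewrite -subr_eq0; apply/negPn/negP => hne.
pose rs := [seq (M.+1 + i)%:R : R | i <- iota 0 (size (p - q))].
suff H : (size rs < size (p - q)%R)%N by move: H; rewrite size_map size_iota ltnn.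
apply: max_poly_roots => //.
  apply/allP => x /mapP [i _ ->]; rewrite /root hornerD hornerN h ?subrr //; lia.
rewrite map_inj_uniq ?iota_uniq // => a b /eqP; rewrite eqr_nat => /eqP; lia.
Qed.

Lemma desc_count_nil n : (0 < n)%N -> desc_count [::] n = 1%N.
Proof.
move=> hn; rewrite desc_countE // -(cards1 (1%g : 'S_n)); apply: eq_card => s.
rewrite !inE; apply/idP/eqP.
  move=> hD; apply/permP => i; rewrite perm1; apply: asc_id; first exact: perm_inj.
  move=> a ha; move/allP: hD => /(_ a); rewrite mem_iota in_nil eqbF_neg -leqNgt.
  by apply; lia.
move=> ->; apply/allP => a; rewrite mem_iota in_nil eqbF_neg -leqNgt => ha.
have h1 : (a < n)%N by lia.
have h2 : (a.-1 < n)%N by lia.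
by rewrite (fvO _ h1) (fvO _ h2) !perm1 /=; lia.
Qed.

End RingPart.
Import RingPart.

Local Open Scope ring_scope.

Theorem proposition4p19 (R : rcfType) (I : seq nat)
  (hI : all (fun i => (0 < i)%N) I) (p : {poly R})
  (hp : is_descent_poly I p) (z0 : R) (hz : root p z0) :
  z0 <= 2 * (maxI I)%:R - 1.
Proof.
case: (altP (I =P [::])) => [eI|hne].
  subst I; exfalso.
  have ep : p = 1.
    apply: (@poly_eq_nat _ _ _ 0%N) => n hn.
    by rewrite hp ?desc_count_nil ?hornerC //; rewrite /maxI big_nil.
  by move: hz; rewrite ep /root hornerC oner_eq0.
have hm0 := maxI_pos hne hI.
move: hp hm0; set m := maxI I => hp hm0.
have hm1 : (m.-1 < m)%N by lia.
pose P (u : {ffun 'I_m -> 'I_m}) := injectiveb u && Du I u.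
pose k (u : {ffun 'I_m -> 'I_m}) := fv u m.-1.
have hk : forall u, (k u < m)%N by move=> u; rewrite /k (fvO u hm1) ltn_ord.
pose q := \sum_(u | P u) (Qp R 0 m - Qp R (k u).+1 (m - (k u).+1)).
have epq : p = q.
  apply: (@poly_eq_nat _ _ _ m) => n hn.
  rewrite hp // count_formula // natr_sum horner_sum; apply: eq_bigr => u _.
  rewrite hornerD hornerN !Qp_nat ?add0n ?subn0 ?(ltnW hn) //; last first.
    by have := hk u; lia.
  have := card_notK u hm0 hn; rewrite -/(k u) => e.
  by rewrite -e natrD addrK.
rewrite leNgt; apply/negP => hz0.
have hmz : m%:R < z0.
  apply: le_lt_trans hz0; rewrite lerBrDr mulr_natl mulr2n lerD2l.
  by rewrite ler1n.
have term : forall u, 0 < (Qp R 0 m).[z0] - (Qp R (k u).+1 (m - (k u).+1)).[z0].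
  move=> u; rewrite subr_gt0.
  have h1 : (m - (m - (k u).+1) = (k u).+1)%N by have := hk u; lia.
  have := @G_lt R m z0 hmz (m - (k u).+1)%N ltac:(have := hk u; lia).
  by rewrite /G h1 subnn.
move: hz; rewrite epq /root horner_sum.
have [u0 hu0] := exists_u I m.
rewrite (bigD1 u0) //= hornerD hornerN.
apply/negP; rewrite gt_eqF //; apply: (lt_le_trans (term u0)); rewrite lerDl.
apply: sumr_ge0 => u _; rewrite hornerD hornerN; exact: ltW (term u).
Qed.
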